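(* Let $n>0$ and let $\mathcal{P}=(P_1,\dots,P_n)$ be a family of lattice polytopes in $\mathbb{R}^d$ with $0\in P_i$ for all $i$. Then \[ (-1)^n\,\mathrm{CM}E(P_1,\dots,P_n)\;=\;\sum_{\mu\in P_{[n]}\cap\mathbb{Z}^d}\tilde\chi\big(\Delta(\mathcal{P};\mu)\big), \] where $\tilde\chi$ denotes the reduced Euler characteristic.
   Context: A lattice polytope is a convex polytope in $\mathbb{R}^d$ all of whose vertices lie in $\mathbb{Z}^d$. For $S\subseteq[n]=\{1,\dots,n\}$ write $P_S:=\sum_{i\in S}P_i=\{\sum_{i\in S}p_i : p_i\in P_i\}$ (Minkowski sum), with $P_\emptyset:=\{0\}$. For a set $S\subset\mathbb{R}^d$, the discrete volume is $E(S):=|S\cap\mathbb{Z}^d|$. The discrete mixed volume is $\mathrm{CM}E(P_1,\dots,P_n):=\sum_{I\subseteq[n]}(-1)^{n-|I|}E(P_I)$. For $\mu\in\mathbb{R}^d$, the Minkowski complex $\Delta(\mathcal{P};\mu)$ is the simplicial complex on vertex set $[n]$ consisting of all $\sigma\subseteq[n]$ with $\mu\notin P_\sigma$. The reduced Euler characteristic of a simplicial complex $\Delta$ (a family of subsets closed under taking subsets, possibly containing the empty set) is $\tilde\chi(\Delta)=\sum_{\sigma\in\Delta}(-1)^{|\sigma|-1}$. *)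

(* Defs.v *)
From HB Require Import structures.
From mathcomp Require Import all_boot all_order all_algebra.
From mathcomp Require Import finmap.
From mathcomp Require Import boolp classical_sets cardinality reals.
Set Implicit Arguments. Unset Strict Implicit. Unset Printing Implicit Defensive.
Import Order.TTheory GRing.Theory Num.Theory.
Local Open Scope classical_set_scope.
Local Open Scope ring_scope.

Definition intvec (R : realType) (d : nat) (z : 'rV[int]_d) : 'rV[R]_d :=
  map_mx (fun k : int => k%:~R) z.

(* convex hull of a finite list V of integer points: a lattice polytope
   (every lattice polytope is the convex hull of its integer vertices). *)
Definition lattice_polytope (R : realType) (d : nat) (V : seq 'rV[int]_d)
  : set 'rV[R]_d :=
  [set x | exists w : 'I_(size V) -> R,
     (forall i, 0 <= w i) /\ \sum_i w i = 1 /\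
     x = \sum_i w i *: intvec R (nth 0 V i)].

Definition minkowski (R : realType) (d n : nat) (P : 'I_n -> set 'rV[R]_d)
  (S : {set 'I_n}) : set 'rV[R]_d :=
  [set x | exists p : 'I_n -> 'rV[R]_d,
     (forall i, i \in S -> P i (p i)) /\ x = \sum_(i in S) p i].

Definition lattice_points (R : realType) (d : nat) (A : set 'rV[R]_d)
  : {fset 'rV[int]_d} :=
  fset_set [set z : 'rV[int]_d | A (intvec R z)].

Definition discrete_volume (R : realType) (d : nat) (A : set 'rV[R]_d) : nat :=
  #|` lattice_points A |%fset.

Definition discrete_mixed_volume (R : realType) (d n : nat)
  (P : 'I_n -> set 'rV[R]_d) : int :=
  \sum_(I : {set 'I_n}) (-1) ^+ (n - #|I|)%N * (discrete_volume (minkowski P I))%:Z.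

Definition minkowski_complex (R : realType) (d n : nat)
  (P : 'I_n -> set 'rV[R]_d) (mu : 'rV[R]_d) : pred {set 'I_n} :=
  fun sigma => `[< ~ minkowski P sigma mu >].

(* reduced Euler characteristic: sum_{sigma in Delta} (-1)^{|sigma|-1};
   (-1)^{|sigma|-1} is written (-1)^{|sigma|+1} to stay in nat exponents. *)
Definition reduced_euler_char (n : nat) (Delta : pred {set 'I_n}) : int :=
  \sum_(sigma : {set 'I_n} | Delta sigma) (-1) ^+ (#|sigma|.+1).

(* Main.v *)
Require Import Defs.
From HB Require Import structures.
From mathcomp Require Import all_boot all_order all_algebra.
From mathcomp Require Import finmap.
From mathcomp Require Import boolp classical_sets cardinality reals.
Import Order.TTheory GRing.Theory Num.Theory.
Local Open Scope ring_scope.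

Section Aux.
Local Set Implicit Arguments.
Local Unset Strict Implicit.
Lemma alt_sum (n : nat) (hn : (0 < n)%N) :
  \sum_(I : {set 'I_n}) (-1) ^+ #|I| = 0 :> int.
Proof.
pose i0 : 'I_n := Ordinal hn.
pose t (I : {set 'I_n}) := if i0 \in I then I :\ i0 else i0 |: I.
have tK : involutive t.
  move=> I; rewrite /t; case h: (i0 \in I).
    by rewrite setD11 finset.setD1K.
  by rewrite setU11 setU1K ?h.
have ft : forall I, (-1) ^+ #|t I| = - (-1) ^+ #|I| :> int.
  move=> I; rewrite /t; case h: (i0 \in I).
    by rewrite [in RHS](cardsD1 i0) h exprS mulN1r opprK.
  by rewrite cardsU1 h exprS mulN1r.
set S := \sum_I _.
have : S = - S.
  rewrite {1}/S (reindex_inj (can_inj tK)) /= -sumrN.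
  by apply: eq_bigr => I _; rewrite ft.
move/eqP; rewrite -subr_eq0 opprK -mulr2n => /eqP.
by move/eqP; rewrite mulrn_eq0 /= => /eqP.
Qed.

Lemma sumPosz (T : Type) (s : seq T) (F : T -> nat) :
  ((\sum_(z <- s) F z)%N)%:Z = \sum_(z <- s) (F z)%:Z.
Proof.
elim: s => [|a s IH]; first by rewrite !big_nil.
by rewrite !big_cons PoszD IH.
Qed.

Lemma card_sub (T : choiceType) (X : {fset T}) (S : set T) :
  (S `<=` [set` X])%classic ->
  #|` fset_set S|%fset = (\sum_(z <- X) (`[< S z >] : nat))%N.
Proof.
move=> SX.
have fS : finite_set S by apply: finite_subfset SX.
rewrite -big_mkcond /= sum1_count -size_filter.
apply: perm_size; apply: uniq_perm.
- exact: fset_uniq.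
- by apply: filter_uniq; apply: fset_uniq.
move=> z; rewrite mem_filter in_fset_set //.
case: (boolP `[< S z >]) => [/asboolP Sz|/asboolPn nSz] /=.
  by rewrite mem_set //; have := SX _ Sz.
by apply/negbTE/negP => /set_mem.
Qed.

Lemma sign_sub (n k : nat) : (k <= n)%N ->
  (-1) ^+ n * (-1) ^+ (n - k) = (-1) ^+ k :> int.
Proof.
move=> kn; rewrite -exprD -signr_odd -[RHS]signr_odd oddD oddB //.
by rewrite addbA addbb.
Qed.
Lemma mink_mono (R : realType) (d n : nat) (P : 'I_n -> set 'rV[R]_d)
  (I : {set 'I_n}) (x : 'rV[R]_d) :
  (forall i, P i 0) -> minkowski P I x -> minkowski P [set: 'I_n]%SET x.
Proof.
move=> h0 [p [hp ->]].
exists (fun i => if i \in I then p i else 0); split.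
  by move=> i _; case: ifP => // /hp.
rewrite [LHS]big_mkcond; apply: eq_bigl => i; by rewrite inE.
Qed.

Lemma finite_box (d B : nat) :
  finite_set [set z : 'rV[int]_d | forall k, `|z 0 k| <= B%:Z].
Proof.
pose f (g : {ffun 'I_d -> 'I_(B + B).+1}) : 'rV[int]_d :=
  \row_k ((g k : nat)%:Z - B%:Z).
apply: (sub_finite_set (B := f @` setT)); last exact: finite_image.
move=> z hz; pose g : {ffun 'I_d -> 'I_(B + B).+1} := [ffun k : 'I_d => inord (absz (z ord0 k + B%:Z)%R)].
exists g => //; apply/rowP => k; rewrite mxE ffunE.
have h := hz k; rewrite ler_norml in h; case/andP: h => h1 h2.
have hpos : 0 <= z 0 k + B%:Z by rewrite -lerBlDr sub0r.
rewrite inordK; first by rewrite gez0_abs // addrK.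
rewrite ltnS -lez_nat gez0_abs // PoszD lerD2r //.
Qed.

Definition vbound (d : nat) (V : seq 'rV[int]_d) : nat :=
  (\max_(v <- V) \max_(k < d) `|v ord0 k|)%N.

Lemma polytope_bound (R : realType) (d : nat) (V : seq 'rV[int]_d) x :
  @lattice_polytope R d V x -> forall k, `|x 0 k| <= (vbound V)%:R.
Proof.
case=> w [w0 [w1 ->]] k; rewrite summxE.
apply: le_trans (ler_norm_sum _ _ _) _.
have H : \sum_i `|(w i *: intvec R (nth 0 V i)) 0 k| <= \sum_i w i * (vbound V)%:R.
  apply: ler_sum => i _; rewrite /intvec !mxE normrM ger0_norm //.
  apply: ler_wpM2l => //.
  rewrite -intr_norm -natr_absz ler_nat.
  have h1 := @leq_bigmax _ (fun k => `|nth 0%R V i ord0 k|%N) k.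
  have h2 := @leq_bigmax_seq _ V predT (fun v => \max_(k < d) `|v ord0 k|)%N
     _ (mem_nth 0%R (ltn_ord i)) isT.
  exact: (leq_trans h1 h2).
apply: le_trans H _.
by rewrite -mulr_suml w1 mul1r.
Qed.

Lemma lattice_finite (R : realType) (d n : nat) (V : 'I_n -> seq 'rV[int]_d) :
  finite_set [set z | minkowski (fun i => @lattice_polytope R d (V i))
                        [set: 'I_n]%SET (intvec R z)].
Proof.
pose B := (\sum_i vbound (V i))%N.
apply: (sub_finite_set (B := [set z : 'rV[int]_d | forall k, `|z 0 k| <= B%:Z]));
  last exact: finite_box.
move=> z [p [hp hx]] k.
have H : `|intvec R z 0 k| <= B%:R.
  rewrite hx (eq_bigl xpredT _ (@finset.in_setT _)) summxE; apply: le_trans (ler_norm_sum _ _ _) _.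
  rewrite /B natr_sum; apply: ler_sum => i _.
  exact: polytope_bound (hp i (finset.in_setT i)) k.
move: H; rewrite /intvec mxE -intr_norm -natr_absz ler_nat => H.
by rewrite -abszE lez_nat.
Qed.
End Aux.

Theorem theorem1 (R : realType) (d n : nat) (V : 'I_n -> seq 'rV[int]_d)
  (hn : (0 < n)%N)
  (h0 : forall i, @lattice_polytope R d (V i) 0) :
  let P := fun i => @lattice_polytope R d (V i) in
  (-1) ^+ n * discrete_mixed_volume P =
  \sum_(mu <- lattice_points (minkowski P [set: 'I_n]%SET))
     reduced_euler_char (minkowski_complex P (@intvec R d mu)).
Proof.
move=> P.
set A := lattice_points (minkowski P [set: 'I_n]%SET).
have fin := lattice_finite R V.
have sub : forall I, ([set z | minkowski P I (intvec R z)] `<=` [set` A])%classic.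
  move=> I z hz; rewrite /= /A /lattice_points in_fset_set //.
  by apply: mem_set; apply: mink_mono h0 hz.
have vol : forall I, (discrete_volume (minkowski P I))%:Z =
   \sum_(z <- A) (`[< minkowski P I (intvec R z) >] : nat)%:Z.
  by move=> I; rewrite /discrete_volume /lattice_points (card_sub (sub I)) sumPosz.
rewrite /discrete_mixed_volume.
under eq_bigr do rewrite vol mulr_sumr.
rewrite mulr_sumr.
under eq_bigr do rewrite mulr_sumr.
rewrite exchange_big /=; apply: eq_bigr => z _.
rewrite /reduced_euler_char /minkowski_complex.
transitivity (\sum_(I : {set 'I_n})
  ((-1) ^+ #|I| * (`[< minkowski P I (intvec R z) >] : nat)%:Z - (-1) ^+ #|I|)).
  rewrite sumrB alt_sum // subr0; apply: eq_bigr => I _.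
  rewrite mulrA sign_sub //; apply: leq_trans (max_card I) _.
  by rewrite card_ord.
rewrite [RHS]big_mkcond; apply: eq_bigr => I _; rewrite asbool_neg.
case: (`[< _ >]) => /=; first by rewrite mulr1 subrr.
by rewrite mulr0 sub0r exprS mulN1r.
Qed.
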